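(* $\operatorname{RBM}_{3,2}\subseteq\mathcal{M}_{3,3}$.
   Context: A distribution of three binary random variables is a $2\times2\times2$ tensor $p=(p_{ijk})_{i,j,k\in\{0,1\}}$ with nonnegative entries summing to $1$; the set of these is the simplex $\Delta_7$. For $a,b,c\in\mathbb{R}^2_{\ge0}$, $a\otimes b\otimes c$ is the tensor with entries $a_ib_jc_k$. $\mathcal{M}_{3,3}$ is the set of $p\in\Delta_7$ that are a sum of three tensors of the form $a\otimes b\otimes c$ with $a,b,c\in\mathbb{R}^2_{\ge0}$. $\operatorname{RBM}_{3,2}$ is the set of $p\in\Delta_7$ of the form $p=(a_1\otimes b_1\otimes c_1+d_1\otimes e_1\otimes f_1)*(a_2\otimes b_2\otimes c_2+d_2\otimes e_2\otimes f_2)$ with all vectors in $\mathbb{R}^2_{\ge0}$, where $*$ is the entrywise (Hadamard) product. *)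

(* Defs.v *)
From Stdlib Require Import Reals.
Open Scope R_scope.

(* A vector in R^2, indexed by {0,1} encoded as bool (false = 0, true = 1). *)
Definition vec2 := bool -> R.
Definition tensor222 := bool -> bool -> bool -> R.

Definition nonneg2 (a : vec2) : Prop := 0 <= a false /\ 0 <= a true.

Definition outer3 (a b c : vec2) : tensor222 := fun i j k => a i * b j * c k.

Definition tadd (p q : tensor222) : tensor222 := fun i j k => p i j k + q i j k.
Definition thad (p q : tensor222) : tensor222 := fun i j k => p i j k * q i j k.

Definition in_simplex (p : tensor222) : Prop :=
  (forall i j k, 0 <= p i j k) /\
  p false false false + p false false true + p false true false + p false true true
  + p true false false + p true false true + p true true false + p true true true = 1.

Definition in_M33 (p : tensor222) : Prop :=
  in_simplex p /\
  exists a1 b1 c1 a2 b2 c2 a3 b3 c3 : vec2,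
    nonneg2 a1 /\ nonneg2 b1 /\ nonneg2 c1 /\
    nonneg2 a2 /\ nonneg2 b2 /\ nonneg2 c2 /\
    nonneg2 a3 /\ nonneg2 b3 /\ nonneg2 c3 /\
    p = tadd (outer3 a1 b1 c1) (tadd (outer3 a2 b2 c2) (outer3 a3 b3 c3)).

Definition in_RBM32 (p : tensor222) : Prop :=
  in_simplex p /\
  exists a1 b1 c1 d1 e1 f1 a2 b2 c2 d2 e2 f2 : vec2,
    nonneg2 a1 /\ nonneg2 b1 /\ nonneg2 c1 /\
    nonneg2 d1 /\ nonneg2 e1 /\ nonneg2 f1 /\
    nonneg2 a2 /\ nonneg2 b2 /\ nonneg2 c2 /\
    nonneg2 d2 /\ nonneg2 e2 /\ nonneg2 f2 /\
    p = thad (tadd (outer3 a1 b1 c1) (outer3 d1 e1 f1))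
             (tadd (outer3 a2 b2 c2) (outer3 d2 e2 f2)).

(* Main.v *)
Require Import Defs.
From Stdlib Require Import Reals Lra Psatz FunctionalExtensionality.
Open Scope R_scope.

Definition M3dec (p : tensor222) : Prop :=
  exists a1 b1 c1 a2 b2 c2 a3 b3 c3 : vec2,
    nonneg2 a1 /\ nonneg2 b1 /\ nonneg2 c1 /\
    nonneg2 a2 /\ nonneg2 b2 /\ nonneg2 c2 /\
    nonneg2 a3 /\ nonneg2 b3 /\ nonneg2 c3 /\
    p = tadd (outer3 a1 b1 c1) (tadd (outer3 a2 b2 c2) (outer3 a3 b3 c3)).

Definition mk (x y : R) : vec2 := fun b => if b then y else x.

Lemma nonneg_mk x y : 0 <= x -> 0 <= y -> nonneg2 (mk x y).
Proof. intros; split; simpl; auto. Qed.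

Lemma mat_dec (s00 s01 s10 s11 : R) : 0<=s00 -> 0<=s01 -> 0<=s10 -> 0<=s11 ->
  s01*s10 <= s00*s11 ->
  exists x0 x1 y0 y1 t, 0<=x0 /\ 0<=x1 /\ 0<=y0 /\ 0<=y1 /\ 0<=t /\
    s00 = x0*y0+t /\ s01 = x0*y1 /\ s10 = x1*y0 /\ s11 = x1*y1.
Proof.
  intros H0 H1 H2 H3 Hd.
  destruct (Rle_lt_or_eq_dec 0 s11 H3) as [Hp|Hz].
  - exists (s01/s11), 1, s10, s11, (s00 - s01*s10/s11).
    assert (0 <= s01/s11) by (unfold Rdiv; apply Rmult_le_pos; [lra | left; apply Rinv_0_lt_compat; lra]).
    assert (s01*s10/s11 <= s00).
    { apply (Rmult_le_reg_r s11); [lra|]. field_simplify; [lra|lra]. }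
    repeat split; try lra; field; lra.
  - subst s11.
    assert (s01 * s10 = 0) by nra.
    destruct (Rmult_integral _ _ H) as [E|E].
    + exists 0, 1, s10, 0, s00. subst; repeat split; lra.
    + exists 1, 0, 0, s01, s00. subst; repeat split; lra.
Qed.

Lemma dec3 (p : tensor222) : (forall i j k, 0 <= p i j k) ->
  ((forall k, p false true k * p true false k <= p false false k * p true true k) \/
   (forall k, p false false k * p true true k <= p false true k * p true false k)) ->
  M3dec p.
Proof.
  intros Hn [H|H].
  - destruct (mat_dec (p false false false) (p false true false) (p true false false) (p true true false))
      as (x0 & x1 & y0 & y1 & t & ? & ? & ? & ? & ? & E1 & E2 & E3 & E4); auto.
    destruct (mat_dec (p false false true) (p false true true) (p true false true) (p true true true))
      as (u0 & u1 & v0 & v1 & s & ? & ? & ? & ? & ? & F1 & F2 & F3 & F4); auto.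
    exists (mk 1 0), (mk 1 0), (mk t s), (mk x0 x1), (mk y0 y1), (mk 1 0),
      (mk u0 u1), (mk v0 v1), (mk 0 1).
    repeat split; simpl; try lra.
    apply functional_extensionality; intro i;
    apply functional_extensionality; intro j;
    apply functional_extensionality; intro k.
    destruct i, j, k; unfold tadd, outer3, mk; simpl; lra.
  - destruct (mat_dec (p false true false) (p false false false) (p true true false) (p true false false))
      as (x0 & x1 & y0 & y1 & t & ? & ? & ? & ? & ? & E1 & E2 & E3 & E4); auto; try lra.
    destruct (mat_dec (p false true true) (p false false true) (p true true true) (p true false true))
      as (u0 & u1 & v0 & v1 & s & ? & ? & ? & ? & ? & F1 & F2 & F3 & F4); auto; try lra.
    exists (mk 1 0), (mk 0 1), (mk t s), (mk x0 x1), (mk y1 y0), (mk 1 0),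
      (mk u0 u1), (mk v1 v0), (mk 0 1).
    repeat split; simpl; try lra.
    apply functional_extensionality; intro i;
    apply functional_extensionality; intro j;
    apply functional_extensionality; intro k.
    destruct i, j, k; unfold tadd, outer3, mk; simpl; lra.
Qed.

Lemma had_ge f00 f01 f10 f11 g00 g01 g10 g11 :
  0<=f01 -> 0<=f10 -> 0<=g01 -> 0<=g10 ->
  f01*f10 <= f00*f11 -> g01*g10 <= g00*g11 ->
  (f01*g01)*(f10*g10) <= (f00*g00)*(f11*g11).
Proof.
  intros. replace ((f01*g01)*(f10*g10)) with ((f01*f10)*(g01*g10)) by ring.
  replace ((f00*g00)*(f11*g11)) with ((f00*f11)*(g00*g11)) by ring.
  apply Rmult_le_compat; auto; apply Rmult_le_pos; auto.
Qed.

Definition cr (a d : vec2) : R := a false * d true - a true * d false.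

Lemma rbm3 (a1 b1 c1 d1 e1 f1 a2 b2 c2 d2 e2 f2 : vec2) :
  nonneg2 a1 -> nonneg2 b1 -> nonneg2 c1 ->
  nonneg2 d1 -> nonneg2 e1 -> nonneg2 f1 ->
  nonneg2 a2 -> nonneg2 b2 -> nonneg2 c2 ->
  nonneg2 d2 -> nonneg2 e2 -> nonneg2 f2 ->
  0 <= (cr a1 d1 * cr b1 e1) * (cr a2 d2 * cr b2 e2) ->
  M3dec (thad (tadd (outer3 a1 b1 c1) (outer3 d1 e1 f1))
              (tadd (outer3 a2 b2 c2) (outer3 d2 e2 f2))).
Proof.
  intros [Ha0 Ha1] [Hb0 Hb1] [Hc0 Hc1] [Hd0 Hd1] [He0 He1] [Hf0 Hf1]
         [Ha0' Ha1'] [Hb0' Hb1'] [Hc0' Hc1'] [Hd0' Hd1'] [He0' He1'] [Hf0' Hf1'] H.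
  assert (HF : forall (a b c d e f : vec2) k,
    (a false * b false * c k + d false * e false * f k) *
    (a true * b true * c k + d true * e true * f k) -
    (a false * b true * c k + d false * e true * f k) *
    (a true * b false * c k + d true * e false * f k) = c k * f k * (cr a d * cr b e)).
  { intros; unfold cr; ring. }
  assert (Hck : forall k, 0 <= c1 k * f1 k) by (intros []; apply Rmult_le_pos; auto).
  assert (Hck' : forall k, 0 <= c2 k * f2 k) by (intros []; apply Rmult_le_pos; auto).
  assert (Hnn : forall (a b c d e f : vec2) i j k, nonneg2 a -> nonneg2 b -> nonneg2 c ->
     nonneg2 d -> nonneg2 e -> nonneg2 f -> 0 <= a i * b j * c k + d i * e j * f k).
  { intros a b c d e f i j k [? ?] [? ?] [? ?] [? ?] [? ?] [? ?].
    destruct i, j, k; apply Rplus_le_le_0_compat; repeat apply Rmult_le_pos; auto. }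
  assert (N1 : forall i j k, 0 <= a1 i * b1 j * c1 k + d1 i * e1 j * f1 k)
    by (intros; apply Hnn; split; auto).
  assert (N2 : forall i j k, 0 <= a2 i * b2 j * c2 k + d2 i * e2 j * f2 k)
    by (intros; apply Hnn; split; auto).
  set (u := cr a1 d1 * cr b1 e1) in *.
  set (v := cr a2 d2 * cr b2 e2) in *.
  apply dec3.
  { intros; unfold thad, tadd, outer3; apply Rmult_le_pos; auto. }
  assert (Hcase : (0 <= u /\ 0 <= v) \/ (u <= 0 /\ v <= 0)).
  { destruct (Rle_or_lt 0 u), (Rle_or_lt 0 v); try (left; lra); try (right; lra).
    - assert (u = 0) by nra. right; lra.
    - assert (v = 0) by nra. right; lra. }
  destruct Hcase as [[Hu Hv]|[Hu Hv]]; [left|right]; intro k;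
    unfold thad, tadd, outer3;
    specialize (HF a1 b1 c1 d1 e1 f1 k) as HF1;
    specialize (HF a2 b2 c2 d2 e2 f2 k) as HF2; fold u in HF1; fold v in HF2.
  - apply had_ge; auto.
    + specialize (Hck k); nra.
    + specialize (Hck' k); nra.
  - apply had_ge; auto.
    + specialize (Hck k); nra.
    + specialize (Hck' k); nra.
Qed.

Lemma M3dec_132 (p q : tensor222) : M3dec q -> (forall i j k, p i j k = q i k j) -> M3dec p.
Proof.
  intros (x1 & y1 & z1 & x2 & y2 & z2 & x3 & y3 & z3 & ? & ? & ? & ? & ? & ? & ? & ? & ? & E) Hpq.
  exists x1, z1, y1, x2, z2, y2, x3, z3, y3; do 9 (split; [assumption|]).
  apply functional_extensionality; intro i;
  apply functional_extensionality; intro j;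
  apply functional_extensionality; intro k.
  rewrite Hpq, E; unfold tadd, outer3; ring.
Qed.

Lemma M3dec_cyc (p q : tensor222) : M3dec q -> (forall i j k, p i j k = q j k i) -> M3dec p.
Proof.
  intros (x1 & y1 & z1 & x2 & y2 & z2 & x3 & y3 & z3 & ? & ? & ? & ? & ? & ? & ? & ? & ? & E) Hpq.
  exists z1, x1, y1, z2, x2, y2, z3, x3, y3; do 9 (split; [assumption|]).
  apply functional_extensionality; intro i;
  apply functional_extensionality; intro j;
  apply functional_extensionality; intro k.
  rewrite Hpq, E; unfold tadd, outer3; ring.
Qed.

Theorem mainTheorem4 : forall p : tensor222, in_RBM32 p -> in_M33 p.
Proof.
  intros p (Hs & a1 & b1 & c1 & d1 & e1 & f1 & a2 & b2 & c2 & d2 & e2 & f2 &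
    Ha1 & Hb1 & Hc1 & Hd1 & He1 & Hf1 & Ha2 & Hb2 & Hc2 & Hd2 & He2 & Hf2 & E).
  split; [exact Hs|].
  change (M3dec p).
  set (A1 := cr a1 d1); set (B1 := cr b1 e1); set (C1 := cr c1 f1);
  set (A2 := cr a2 d2); set (B2 := cr b2 e2); set (C2 := cr c2 f2).
  destruct (Rle_or_lt 0 ((A1*B1)*(A2*B2))) as [H3|H3].
  { subst p; apply rbm3; auto. }
  destruct (Rle_or_lt 0 ((A1*C1)*(A2*C2))) as [H2|H2].
  { apply (M3dec_132 p (thad (tadd (outer3 a1 c1 b1) (outer3 d1 f1 e1))
              (tadd (outer3 a2 c2 b2) (outer3 d2 f2 e2)))).
    - apply rbm3; auto.
    - intros; subst p; unfold thad, tadd, outer3; ring. }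
  destruct (Rle_or_lt 0 ((B1*C1)*(B2*C2))) as [H1|H1].
  { apply (M3dec_cyc p (thad (tadd (outer3 b1 c1 a1) (outer3 e1 f1 d1))
              (tadd (outer3 b2 c2 a2) (outer3 e2 f2 d2)))).
    - apply rbm3; auto.
    - intros; subst p; unfold thad, tadd, outer3; ring. }
  exfalso.
  assert (0 <= (A1*B1*C1*A2*B2*C2) * (A1*B1*C1*A2*B2*C2)) by apply Rle_0_sqr.
  assert (((A1*B1)*(A2*B2)) * ((A1*C1)*(A2*C2)) > 0) by nra.
  assert (((A1*B1)*(A2*B2)) * ((A1*C1)*(A2*C2)) * ((B1*C1)*(B2*C2)) < 0) by nra.
  replace (((A1*B1)*(A2*B2)) * ((A1*C1)*(A2*C2)) * ((B1*C1)*(B2*C2)))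
    with ((A1*B1*C1*A2*B2*C2) * (A1*B1*C1*A2*B2*C2)) in H4 by ring.
  lra.
Qed.
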